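(* If a quadrilateral $q$ is $\frac{\pi}{12}$-near square and has a right angle adjacent to an acute angle, then $q$ has a periodic billiard path.
   Context: A quadrilateral is cut by a diagonal into two triangles. Its parameters $(a_1,a_2,a_3,a_4)$ are the four angles that the diagonal makes with the four sides (the angles of the two triangles at the endpoints of the diagonal). For $\varepsilon>0$, the quadrilateral is $\varepsilon$-near square if $|a_i-\pi/4|<\varepsilon$ for all $i$. A billiard path is a straight-line trajectory inside the polygon that reflects off the sides with angle of incidence equal to angle of reflection. Trajectories hitting vertices are excluded. It is periodic if it repeats itself. *)

(* Defs.v *)
From Stdlib Require Import Reals Lra Lia.
Open Scope R_scope.

Definition pt := (R * R)%type.

Definition vsub (p q : pt) : pt := (fst p - fst q, snd p - snd q).
Definition vadd (p q : pt) : pt := (fst p + fst q, snd p + snd q).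
Definition vscale (c : R) (p : pt) : pt := (c * fst p, c * snd p).
Definition dot (u v : pt) : R := fst u * fst v + snd u * snd v.
Definition cross (u v : pt) : R := fst u * snd v - snd u * fst v.
Definition vnorm (u : pt) : R := sqrt (dot u u).

Definition angle (u v : pt) : R := acos (dot u v / (vnorm u * vnorm v)).

(* A quadrilateral ABCD cut by the diagonal AC into the two triangles ABC and
   ACD: B and D lie strictly on opposite sides of the line AC. *)
Record quad := Quad { qA : pt; qB : pt; qC : pt; qD : pt }.

Definition is_quadrilateral (q : quad) : Prop :=
  cross (vsub (qC q) (qA q)) (vsub (qB q) (qA q)) *
  cross (vsub (qC q) (qA q)) (vsub (qD q) (qA q)) < 0.

Definition param1 (q : quad) : R := angle (vsub (qC q) (qA q)) (vsub (qB q) (qA q)).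
Definition param2 (q : quad) : R := angle (vsub (qC q) (qA q)) (vsub (qD q) (qA q)).
Definition param3 (q : quad) : R := angle (vsub (qA q) (qC q)) (vsub (qB q) (qC q)).
Definition param4 (q : quad) : R := angle (vsub (qA q) (qC q)) (vsub (qD q) (qC q)).

Definition near_square (eps : R) (q : quad) : Prop :=
  Rabs (param1 q - PI / 4) < eps /\ Rabs (param2 q - PI / 4) < eps /\
  Rabs (param3 q - PI / 4) < eps /\ Rabs (param4 q - PI / 4) < eps.

Definition vtx (q : quad) (k : nat) : pt :=
  match (k mod 4)%nat with
  | 0%nat => qA q | 1%nat => qB q | 2%nat => qC q | _ => qD q
  end.

(* interior angle of the quadrilateral at vertex k *)
Definition vangle (q : quad) (k : nat) : R :=
  match (k mod 4)%nat with
  | 0%nat => param1 q + param2 q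
  | 2%nat => param3 q + param4 q
  | _ => angle (vsub (vtx q (k + 3)) (vtx q k)) (vsub (vtx q (k + 1)) (vtx q k))
  end.

Definition right_adj_acute (q : quad) : Prop :=
  exists k : nat, (k < 4)%nat /\ vangle q k = PI / 2 /\
    (vangle q (k + 1) < PI / 2 \/ vangle q (k + 3) < PI / 2).

Definition in_open_triangle (X Y Z P : pt) : Prop :=
  (0 < cross (vsub Y X) (vsub P X) /\ 0 < cross (vsub Z Y) (vsub P Y) /\
   0 < cross (vsub X Z) (vsub P Z)) \/
  (cross (vsub Y X) (vsub P X) < 0 /\ cross (vsub Z Y) (vsub P Y) < 0 /\
   cross (vsub X Z) (vsub P Z) < 0).

Definition in_open_segment (X Y P : pt) : Prop :=
  exists t, 0 < t < 1 /\ P = vadd X (vscale t (vsub Y X)).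

Definition in_interior (q : quad) (P : pt) : Prop :=
  in_open_triangle (qA q) (qB q) (qC q) P \/
  in_open_triangle (qA q) (qC q) (qD q) P \/
  in_open_segment (qA q) (qC q) P.

Definition reflect (e v : pt) : pt :=
  vsub (vscale (2 * dot v e / dot e e) e) v.

(* A periodic billiard path: a periodic sequence of bounce points p i, p i lying
   in the relative interior of side s i (from vertex s i to vertex s i + 1,
   so no vertex is ever hit), consecutive bounce points joined by segments
   lying in the interior of q, and the law of reflection at every bounce. *)
Definition periodic_billiard_path (q : quad) (n : nat) (p : nat -> pt) (s : nat -> nat) : Prop :=
  (1 <= n)%nat /\
  (forall i, p (i + n)%nat = p i /\ s (i + n)%nat = s i) /\
  (forall i, (s i < 4)%nat /\ in_open_segment (vtx q (s i)) (vtx q (s i + 1)) (p i)) /\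
  (forall i t, 0 < t < 1 ->
     in_interior q (vadd (p i) (vscale t (vsub (p (S i)) (p i))))) /\
  (forall i, exists c, 0 < c /\
     vsub (p (S (S i))) (p (S i)) =
     vscale c (reflect (vsub (vtx q (s (S i) + 1)) (vtx q (s (S i))))
                       (vsub (p (S i)) (p i)))).

Definition has_periodic_billiard_path (q : quad) : Prop :=
  exists n p s, periodic_billiard_path q n p s.

(* Main.v *)
Require Import Defs.
From Stdlib Require Import Reals Lra Lia Psatz List.
Import ListNotations.
Open Scope R_scope.

Definition okP (x y : R) : Prop := 0 < x /\ y*y < 3*(x*x) /\ x*x < 3*(y*y).

Lemma lagrange x y : dot x x * dot y y = dot x y * dot x y + cross x y * cross x y.
Proof. destruct x, y; unfold dot, cross; simpl; ring. Qed.

Lemma lagrange3 x y z : dot x x * dot y z = dot x y * dot x z + cross x y * cross x z.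
Proof. destruct x, y, z; unfold dot, cross; simpl; ring. Qed.

Lemma vnorm_sq x : vnorm x * vnorm x = dot x x.
Proof. unfold vnorm. apply sqrt_sqrt. destruct x; unfold dot; simpl; nra. Qed.

Lemma vnorm_pos x : 0 < dot x x -> 0 < vnorm x.
Proof. intro; unfold vnorm; apply sqrt_lt_R0; auto. Qed.

Lemma angle_facts x y : 0 < dot x x -> 0 < dot y y ->
  exists c, cos (angle x y) = c /\ dot x y = c * (vnorm x * vnorm y) /\
     c * c * (dot x x * dot y y) = dot x y * dot x y /\ 0 <= angle x y <= PI /\
     angle x y = acos c /\ -1 <= c <= 1.
Proof.
  intros Hx Hy.
  pose proof (vnorm_pos x Hx) as nx. pose proof (vnorm_pos y Hy) as ny.
  pose proof (vnorm_sq x) as sx. pose proof (vnorm_sq y) as sy.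
  set (c := dot x y / (vnorm x * vnorm y)).
  assert (Hd : dot x y = c * (vnorm x * vnorm y)) by (unfold c; field; lra).
  assert (Hc2 : c * c * (dot x x * dot y y) = dot x y * dot x y).
  { rewrite Hd, <- sx, <- sy. ring. }
  assert (Hb : -1 <= c <= 1).
  { pose proof (lagrange x y) as L.
    assert (c*c <= 1).
    { assert (0 < dot x x * dot y y) by nra. nra. }
    nra. }
  exists c. split; [|split; [|split; [|split]]]; auto.
  - unfold angle. fold c. apply cos_acos; auto.
  - unfold angle; apply acos_bound.
Qed.

Lemma near_ok x y : 0 < dot x x -> 0 < dot y y ->
  Rabs (angle x y - PI/4) < PI/12 -> okP (dot x y) (cross x y).
Proof.
  intros Hx Hy Ha.
  destruct (angle_facts x y Hx Hy) as [c [Hc [Hd [Hc2 [Hb _]]]]].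
  apply Rabs_def2 in Ha. destruct Ha as [Ha1 Ha2].
  pose proof PI_RGT_0.
  assert (c1 : cos (PI/3) < c).
  { rewrite <- Hc. apply cos_decreasing_1; lra. }
  assert (c2 : c < cos (PI/6)).
  { rewrite <- Hc. apply cos_decreasing_1; lra. }
  rewrite cos_PI3 in c1. rewrite cos_PI6 in c2.
  assert (s3 : sqrt 3 * sqrt 3 = 3) by (apply sqrt_sqrt; lra).
  assert (s3p : 0 < sqrt 3) by (apply sqrt_lt_R0; lra).
  assert (cc : c * c < 3/4) by nra.
  assert (cc' : 1/4 < c*c) by nra.
  pose proof (lagrange x y) as L.
  pose proof (vnorm_pos x Hx). pose proof (vnorm_pos y Hy).
  assert (N : 0 < dot x x * dot y y) by nra.
  set (N' := dot x x * dot y y) in *.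
  set (d := dot x y) in *. set (r := cross x y) in *.
  assert (d*d < 3/4 * N') by nra.
  assert (1/4 * N' < d*d) by nra.
  unfold okP. split; [|split].
  - rewrite Hd. apply Rmult_lt_0_compat; [lra| nra].
  - nra.
  - nra.
Qed.

Lemma right_ok x y : 0 < dot x x -> 0 < dot y y -> angle x y = PI/2 -> dot x y = 0.
Proof.
  intros Hx Hy Ha.
  destruct (angle_facts x y Hx Hy) as [c [Hc [Hd [Hc2 [Hb _]]]]].
  rewrite Ha, cos_PI2 in Hc. rewrite Hd, <- Hc. ring.
Qed.

Lemma acute_ok x y : 0 < dot x x -> 0 < dot y y -> angle x y < PI/2 -> 0 < dot x y.
Proof.
  intros Hx Hy Ha.
  destruct (angle_facts x y Hx Hy) as [c [Hc [Hd [Hc2 [Hb _]]]]].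
  pose proof PI_RGT_0.
  assert (cos (PI/2) < c) by (rewrite <- Hc; apply cos_decreasing_1; lra).
  rewrite cos_PI2 in H0.
  pose proof (vnorm_pos x Hx). pose proof (vnorm_pos y Hy).
  rewrite Hd. apply Rmult_lt_0_compat; [lra| nra].
Qed.

Lemma near_range x y : Rabs (angle x y - PI/4) < PI/12 -> PI/6 < angle x y < PI/3.
Proof. intro H. apply Rabs_def2 in H. lra. Qed.

Lemma sum_ok x y z : 0 < dot x x -> 0 < dot y y -> 0 < dot z z ->
  Rabs (angle x y - PI/4) < PI/12 -> Rabs (angle x z - PI/4) < PI/12 ->
  cross x y * cross x z < 0 ->
  (angle x y + angle x z = PI/2 -> dot y z = 0) /\
  (angle x y + angle x z < PI/2 -> 0 < dot y z).
Proof.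
  intros Hx Hy Hz N1 N2 Hcr.
  pose proof (near_ok x y Hx Hy N1) as O1. pose proof (near_ok x z Hx Hz N2) as O2.
  pose proof (near_range _ _ N1) as R1. pose proof (near_range _ _ N2) as R2.
  destruct (angle_facts x y Hx Hy) as [c1 [Hc1 [Hd1 [Hq1 [Hb1 [Ha1 Hr1]]]]]].
  destruct (angle_facts x z Hx Hz) as [c2 [Hc2 [Hd2 [Hq2 [Hb2 [Ha2 Hr2]]]]]].
  pose proof (lagrange x y) as L1. pose proof (lagrange x z) as L2.
  pose proof (lagrange3 x y z) as L3.
  pose proof PI_RGT_0.
  assert (Hs : sin (angle x y) = sqrt (1 - c1*c1)).
  { rewrite Ha1, sin_acos by auto.
    unfold Rsqr; reflexivity. }
  assert (H1c : 0 <= 1 - c1*c1).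
  { pose proof (COS_bound (angle x y)). rewrite Hc1 in H0. nra. }
  pose proof (sqrt_sqrt _ H1c) as Sq. pose proof (sqrt_pos (1 - c1*c1)) as Sp.
  set (d1 := dot x y) in *. set (d2 := dot x z) in *.
  set (r1 := cross x y) in *. set (r2 := cross x z) in *.
  set (X := dot x x) in *. set (Y := dot y y) in *. set (Z := dot z z) in *.
  destruct O1 as [O1a [O1b O1c]]. destruct O2 as [O2a [O2b O2c]].
  split; intro Hsum.
  - assert (E : c2 = sqrt (1 - c1*c1)).
    { rewrite <- Hc2, <- Hs, <- cos_shift. f_equal. lra. }
    assert (E2 : c2 * c2 = 1 - c1 * c1) by (rewrite E; auto).
    assert (E3 : d2*d2*(X*Y) = r1*r1*(X*Z)).
    { assert (T : d2*d2*(X*Y) = (X*Y - c1*c1*(X*Y))*(X*Z)) by (rewrite <- Hq2, E2; ring).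
      rewrite T, Hq1, L1; ring. }
    rewrite L1, L2 in E3.
    assert (E4 : (d1*d2)*(d1*d2) = (r1*r2)*(r1*r2)) by nra.
    assert (E5 : d1*d2 = - (r1*r2)).
    { assert (0 < d1*d2) by nra. nra. }
    assert (X * dot y z = 0) by (rewrite L3; lra).
    apply Rmult_integral in H0. destruct H0; [lra|auto].
  - assert (E : c2 > sqrt (1 - c1*c1)).
    { rewrite <- Hc2, <- Hs, <- cos_shift. apply cos_decreasing_1; lra. }
    assert (E2 : c2 * c2 > 1 - c1 * c1) by nra.
    assert (XY : 0 < X*Y) by nra. assert (XZ : 0 < X*Z) by nra.
    assert (E3 : d2*d2*(X*Y) > r1*r1*(X*Z)).
    { rewrite <- Hq2. 
      assert (r1*r1 = X*Y - c1*c1*(X*Y)) by (rewrite Hq1; lra).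
      rewrite H0.
      assert (T : c2*c2*(X*Z)*(X*Y) - (X*Y - c1*c1*(X*Y))*(X*Z) = (c2*c2 - (1 - c1*c1))*((X*Y)*(X*Z))) by ring.
      assert (0 < (c2*c2 - (1 - c1*c1))*((X*Y)*(X*Z))) by (apply Rmult_lt_0_compat; nra).
      lra. }
    rewrite L1, L2 in E3.
    assert (E4 : (d1*d2)*(d1*d2) > (r1*r2)*(r1*r2)) by nra.
    assert (E5 : d1*d2 > - (r1*r2)).
    { assert (0 < d1*d2) by nra. nra. }
    assert (0 < X * dot y z) by (rewrite L3; lra).
    nra.
Qed.

Lemma div_lt1 a b : 0 < b -> a < b -> a / b < 1.
Proof.
  intros Hb Hab. apply Rmult_lt_reg_r with b; auto.
  unfold Rdiv. rewrite Rmult_assoc, Rinv_l by lra. lra.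
Qed.

Lemma core_coord (x1 y1 a1 a2 lam e1 e2 y : R) :
  let P1 := (x1, y1) in
  let P0 := (x1 + a1, y1 + a2) in
  let P2 := (x1 - lam * a2, y1 + lam * a1) in
  let P3 := (x1 + a1 + e1, y1 + a2 + e2) in
  let A := a1*a1 + a2*a2 in
  let B := lam*lam*A in
  let k := - (a1*e1 + a2*e2) in
  let m := lam * (a1*e2 - a2*e1) in
  let E := e1*e1 + e2*e2 in
  0 < A -> 0 < B -> 0 < k -> 0 < m -> 0 < E - k ->
  0 < y < 1 -> y*k < m -> y*k < E - k -> y*(k*k)*B < A*(m*m) ->
  exists X Y Z W c1 c2, in_open_segment P0 P3 X /\ in_open_segment P0 P3 W /\
    in_open_segment P0 P1 Y /\ in_open_segment P1 P2 Z /\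
    0 < c1 /\ vsub Z Y = vscale c1 (reflect (vsub P1 P0) (vsub Y X)) /\
    0 < c2 /\ vsub W Z = vscale c2 (reflect (vsub P2 P1) (vsub Z Y)) /\
    dot (vsub Y X) (vsub P3 P0) = 0 /\ dot (vsub W Z) (vsub P3 P0) = 0.
Proof.
  intros P1 P0 P2 P3 A B k m E HA HB Hk Hm Hn Hy Hy1 Hy2 Hy3.
  assert (HE : 0 < E) by lra.
  assert (Hlag : A * E * B = k*k*B + A*(m*m)) by (unfold B, A, E, k, m; ring).
  set (s := (1-y)*k/E). set (z := y*k/m). set (w := k*(1+y)/E).
  set (c1 := y*E*B/((1-y)*(m*m))). set (c2 := (1 - w*k/A)/y).
  exists (vadd P0 (vscale s (vsub P3 P0))), (vadd P0 (vscale (1-y) (vsub P1 P0))),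
    (vadd P1 (vscale z (vsub P2 P1))), (vadd P0 (vscale w (vsub P3 P0))), c1, c2.
  assert (Hlam : lam <> 0).
  { intro H0. unfold B in HB. rewrite H0 in HB. lra. }
  assert (Hs1 : s < 1).
  { unfold s. apply div_lt1; nra. }
  assert (Hs0 : 0 < s) by (unfold s; apply Rdiv_lt_0_compat; nra).
  assert (Hw0 : 0 < w) by (unfold w; apply Rdiv_lt_0_compat; nra).
  assert (Hw1 : w < 1).
  { unfold w. apply div_lt1; nra. }
  assert (Hz0 : 0 < z) by (unfold z; apply Rdiv_lt_0_compat; nra).
  assert (Hz1 : z < 1).
  { unfold z. apply div_lt1; nra. }
  assert (Hc1 : 0 < c1).
  { unfold c1. apply Rdiv_lt_0_compat. 
    - apply Rmult_lt_0_compat; [nra|lra].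
    - apply Rmult_lt_0_compat; nra. }
  assert (Hc2 : 0 < c2).
  { unfold c2. apply Rdiv_lt_0_compat; [|lra].
    assert (w*k < A).
    { unfold w. replace (k*(1+y)/E*k) with ((k*k*(1+y)*B)/(E*B)) by (field; lra).
      assert (0 < E*B) by nra.
      apply Rmult_lt_reg_r with (E*B); auto.
      unfold Rdiv. rewrite Rmult_assoc, Rinv_l by lra. nra. }
    assert (w*k/A < 1) by (apply div_lt1; lra).
    lra. }
  split; [exists s; split; [lra|reflexivity]|].
  split; [exists w; split; [lra|reflexivity]|].
  split; [exists (1-y); split; [lra|reflexivity]|].
  split; [exists z; split; [lra|reflexivity]|].
  split; [auto|]. split.
  { unfold c1, z, s, P0, P1, P2, P3, reflect, vsub, vadd, vscale, dot; simpl.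
    unfold E, B, A, k, m in *.
    f_equal; field; repeat split; nra. }
  split; [auto|]. split.
  { unfold c2, w, z, s, P0, P1, P2, P3, reflect, vsub, vadd, vscale, dot; simpl.
    unfold E, B, A, k, m in *.
    f_equal; field; repeat split; nra. }
  split.
  { unfold s, P0, P1, P2, P3, reflect, vsub, vadd, vscale, dot; simpl.
    unfold E, B, A, k, m in *. field. lra. }
  { unfold w, z, P0, P1, P2, P3, reflect, vsub, vadd, vscale, dot; simpl.
    unfold E, B, A, k, m in *. field. repeat split; try lra; intro H0; rewrite H0 in Hm; lra. }
Qed.

Lemma ylt Q p r : 0 < r -> 0 < p -> p / r < Q -> (1/Q) * p < r.
Proof.
  intros Hr Hp H.
  assert (0 < p / r) by (apply Rdiv_lt_0_compat; auto).
  assert (HQ : 0 < Q) by lra.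
  assert (p < r * Q).
  { apply Rmult_lt_reg_r with (/ r); [apply Rinv_0_lt_compat; auto|].
    replace (r * Q * / r) with Q by (field; lra). exact H. }
  apply Rmult_lt_reg_r with Q; auto.
  replace (1 / Q * p * Q) with p by (field; lra). lra.
Qed.

Lemma core (P0 P1 P2 P3 : pt) :
  dot (vsub P0 P1) (vsub P2 P1) = 0 -> 0 < dot (vsub P0 P1) (vsub P0 P1) ->
  0 < dot (vsub P2 P1) (vsub P2 P1) ->
  0 < dot (vsub P1 P0) (vsub P3 P0) -> 0 < dot (vsub P3 P0) (vsub P2 P1) ->
  0 < dot (vsub P3 P0) (vsub P3 P1) ->
  exists X Y Z W c1 c2, in_open_segment P0 P3 X /\ in_open_segment P0 P3 W /\
    in_open_segment P0 P1 Y /\ in_open_segment P1 P2 Z /\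
    0 < c1 /\ vsub Z Y = vscale c1 (reflect (vsub P1 P0) (vsub Y X)) /\
    0 < c2 /\ vsub W Z = vscale c2 (reflect (vsub P2 P1) (vsub Z Y)) /\
    dot (vsub Y X) (vsub P3 P0) = 0 /\ dot (vsub W Z) (vsub P3 P0) = 0.
Proof.
  destruct P0 as [p0x p0y], P1 as [x1 y1], P2 as [p2x p2y], P3 as [p3x p3y].
  intros Hab HA HB Hk Hm Hn.
  unfold dot, vsub in Hab, HA, HB, Hk, Hm, Hn. simpl in Hab, HA, HB, Hk, Hm, Hn.
  set (a1 := p0x - x1) in *. set (a2 := p0y - y1) in *.
  set (lam := (a1 * (p2y - y1) - a2 * (p2x - x1)) / (a1*a1+a2*a2)).
  assert (E2x : p2x = x1 - lam * a2).
  { unfold lam. apply Rmult_eq_reg_r with (a1*a1+a2*a2); [|lra].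
    field_simplify; [|lra].
    assert (a1*(a1*(p2x-x1)+a2*(p2y-y1)) = 0) by (rewrite Hab; ring). nra. }
  assert (E2y : p2y = y1 + lam * a1).
  { unfold lam. apply Rmult_eq_reg_r with (a1*a1+a2*a2); [|lra].
    field_simplify; [|lra].
    assert (a2*(a1*(p2x-x1)+a2*(p2y-y1)) = 0) by (rewrite Hab; ring). nra. }
  set (e1 := p3x - p0x). set (e2 := p3y - p0y).
  assert (E0 : (p0x, p0y) = (x1 + a1, y1 + a2)) by (unfold a1, a2; f_equal; ring).
  assert (E3 : (p3x, p3y) = (x1 + a1 + e1, y1 + a2 + e2)) by (unfold a1, a2, e1, e2; f_equal; ring).
  assert (E2 : (p2x, p2y) = (x1 - lam * a2, y1 + lam * a1)) by (f_equal; auto).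
  rewrite E0, E3, E2.
  set (A := a1*a1 + a2*a2).
  set (B := lam*lam*A).
  set (k := - (a1*e1 + a2*e2)).
  set (m := lam * (a1*e2 - a2*e1)).
  set (E := e1*e1 + e2*e2).
  assert (HA' : 0 < A) by (unfold A; nra).
  assert (HB' : 0 < B).
  { unfold B. rewrite E2x, E2y in HB.
    replace (x1 - lam * a2 - x1) with (- (lam*a2)) in HB by ring.
    replace (y1 + lam * a1 - y1) with (lam*a1) in HB by ring.
    unfold A. nra. }
  assert (Hk' : 0 < k).
  { unfold k, e1, e2, a1, a2. nra. }
  assert (Hm' : 0 < m).
  { unfold m. rewrite E2x, E2y in Hm. fold e1 e2 in Hm. 
    replace (x1 - lam * a2 - x1) with (- (lam*a2)) in Hm by ring.
    replace (y1 + lam * a1 - y1) with (lam*a1) in Hm by ring. nra. }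
  assert (Hn' : 0 < E - k).
  { unfold E, k. fold e1 e2 in Hn.
    replace (p3x - x1) with (e1 + a1) in Hn by (unfold e1, a1; ring).
    replace (p3y - y1) with (e2 + a2) in Hn by (unfold e2, a2; ring). nra. }
  set (Q := 2 + k/m + k/(E-k) + (k*k*B)/(A*(m*m))).
  assert (T1 : 0 < k/m) by (apply Rdiv_lt_0_compat; auto).
  assert (T2 : 0 < k/(E-k)) by (apply Rdiv_lt_0_compat; auto).
  assert (0 < k*k*B) by (apply Rmult_lt_0_compat; [apply Rmult_lt_0_compat|]; auto).
  assert (0 < A*(m*m)) by (apply Rmult_lt_0_compat; [|apply Rmult_lt_0_compat]; auto).
  assert (T3 : 0 < (k*k*B)/(A*(m*m))) by (apply Rdiv_lt_0_compat; auto).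
  assert (HQ : 2 < Q) by (unfold Q; lra).
  apply (core_coord x1 y1 a1 a2 lam e1 e2 (1/Q)); fold A B k m E; auto.
  - split. 
    + apply Rdiv_lt_0_compat; lra.
    + apply div_lt1; lra.
  - apply ylt; auto. unfold Q; lra.
  - apply ylt; auto. unfold Q; lra.
  - rewrite Rmult_assoc. apply ylt; [nra|nra|]. unfold Q; lra.
Qed.

Definition fs (q : quad) (i : nat) (P : pt) : R :=
  cross (vsub (vtx q (i+1)) (vtx q i)) (vsub P (vtx q i)).

Definition convex (q : quad) (sg : R) : Prop :=
  (sg = 1 \/ sg = -1) /\
  (forall i, (i < 4)%nat -> 0 < sg * fs q i (vtx q (i+2)) /\ 0 < sg * fs q i (vtx q (i+3))).

Lemma seg_aff e O X Y t :
  cross e (vsub (vadd X (vscale t (vsub Y X))) O) =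
  (1-t) * cross e (vsub X O) + t * cross e (vsub Y O).
Proof. destruct e, O, X, Y; unfold cross, vsub, vadd, vscale; simpl; ring. Qed.

Lemma vtx_mod q l : vtx q l = vtx q (l mod 4).
Proof. unfold vtx. rewrite Nat.Div0.mod_mod. reflexivity. Qed.

Lemma cross0 e P : cross e (vsub P P) = 0.
Proof. destruct e, P; unfold cross, vsub; simpl; ring. Qed.
Lemma cross_same e : cross e e = 0.
Proof. destruct e; unfold cross; simpl; ring. Qed.

Lemma fs_vtx q sg i l : convex q sg -> (i < 4)%nat ->
  0 <= sg * fs q i (vtx q l) /\
  ((l mod 4 <> i)%nat -> (l mod 4 <> (i+1) mod 4)%nat -> 0 < sg * fs q i (vtx q l)).
Proof.
  intros [Hs Hc] Hi. rewrite vtx_mod.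
  assert (Hl : (l mod 4 < 4)%nat) by (apply Nat.mod_upper_bound; lia).
  destruct (Hc i Hi) as [C2 C3].
  revert C2 C3.
  generalize (l mod 4) Hl. intros r Hr.
  destruct i as [|[|[|[|i]]]]; [| | | | lia];
  destruct r as [|[|[|[|r]]]]; try lia; unfold fs, vtx; simpl; intros C2 C3;
  rewrite ?cross0, ?cross_same, ?Rmult_0_r;
  (split; [lra | intros; (lra || lia)]).
Qed.

Lemma on_side q sg j P : convex q sg -> (j < 4)%nat ->
  in_open_segment (vtx q j) (vtx q (j+1)) P ->
  forall i, (i < 4)%nat -> 0 <= sg * fs q i P /\ (i <> j -> 0 < sg * fs q i P).
Proof.
  intros Hc Hj [t [Ht HP]] i Hi.
  destruct (fs_vtx q sg i j Hc Hi) as [Ha1 Ha2].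
  destruct (fs_vtx q sg i (j+1) Hc Hi) as [Hb1 Hb2].
  replace (sg * fs q i P) with ((1-t) * (sg*fs q i (vtx q j)) + t*(sg * fs q i (vtx q (j+1))))
    by (unfold fs; rewrite HP, seg_aff; ring).
  split; [nra|]. intro Hij.
  destruct (Nat.eq_dec j ((i+1) mod 4)) as [E|E].
  - assert (0 < sg * fs q i (vtx q (j+1))).
    { apply Hb2; subst j; destruct i as [|[|[|[|i]]]]; simpl; lia. }
    nra.
  - assert (0 < sg * fs q i (vtx q j)).
    { apply Ha2; rewrite Nat.mod_small by lia; auto. }
    nra.
Qed.

Lemma in_tri_pos X Y Z P :
  0 < cross (vsub Y X) (vsub P X) -> 0 < cross (vsub Z Y) (vsub P Y) ->
  0 < cross (vsub X Z) (vsub P Z) -> in_open_triangle X Y Z P.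
Proof. intros; left; auto. Qed.

Lemma interior_of_pos q sg P : convex q sg ->
  (forall i, (i < 4)%nat -> 0 < sg * fs q i P) -> in_interior q P.
Proof.
  intros Hc H.
  pose proof (H 0%nat ltac:(lia)) as F0. pose proof (H 1%nat ltac:(lia)) as F1.
  pose proof (H 2%nat ltac:(lia)) as F2. pose proof (H 3%nat ltac:(lia)) as F3.
  destruct Hc as [Hs Hc].
  pose proof (Hc 0%nat ltac:(lia)) as [C02 C03]. pose proof (Hc 1%nat ltac:(lia)) as [C12 C13].
  clear H Hc.
  unfold fs, vtx in *; simpl in *.
  destruct q as [A B C D]; simpl in *.
  set (g := cross (vsub A C) (vsub P C)).
  assert (Hg : cross (vsub C A) (vsub P A) = - g).
  { unfold g. destruct A, C, P; unfold cross, vsub; simpl; ring. }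
  destruct (Rtotal_order (sg * g) 0) as [Hlt|[Heq|Hgt]].
  - right; left. unfold in_open_triangle; simpl. rewrite Hg.
    destruct Hs as [-> | ->].
    + left. nra.
    + right. nra.
  - right; right. unfold in_open_segment.
    assert (Hg0 : g = 0) by (destruct Hs as [-> | ->]; lra).
    destruct A as [a1 a2], C as [c1 c2], P as [p1 p2], B as [b1 b2].
    unfold g, cross, vsub in *; simpl in *.
    set (U := (c1-a1)*(c1-a1) + (c2-a2)*(c2-a2)).
    assert (HU : 0 < U).
    { unfold U. destruct (Req_dec c1 a1); destruct (Req_dec c2 a2).
      - subst. exfalso. nra.
      - nra.
      - nra.
      - nra. }
    assert (HG: (c1 - a1) * (p2 - a2) - (c2 - a2) * (p1 - a1) = 0) by lra.
    assert (HG1 : (c2-a2)*((c1 - a1) * (p2 - a2) - (c2 - a2) * (p1 - a1)) = 0) by (rewrite HG; ring).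
    assert (HG2 : (c1-a1)*((c1 - a1) * (p2 - a2) - (c2 - a2) * (p1 - a1)) = 0) by (rewrite HG; ring).
    set (t := ((p1-a1)*(c1-a1) + (p2-a2)*(c2-a2)) / U).
    assert (E1 : p1 = a1 + t * (c1 - a1)).
    { unfold t. apply Rmult_eq_reg_r with U; [|lra].
      field_simplify; [|lra]. unfold U. lra. }
    assert (E2 : p2 = a2 + t * (c2 - a2)).
    { unfold t. apply Rmult_eq_reg_r with U; [|lra].
      field_simplify; [|lra]. unfold U. lra. }
    exists t. split.
    + rewrite E1, E2 in F0, F1.
      assert (T0 : 0 < t * (sg * ((b1 - a1) * (c2 - a2) - (b2 - a2) * (c1 - a1)))) by nra.
      assert (T1 : 0 < (1-t) * (sg * ((c1 - b1) * (a2 - b2) - (c2 - b2) * (a1 - b1)))) by nra.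
      split.
      * destruct (Rle_lt_dec t 0); [|auto]. nra.
      * destruct (Rle_lt_dec 1 t); [|lra]. nra.
    + unfold vadd, vscale, vsub; simpl. rewrite <- E1, <- E2. reflexivity.
  - left. unfold in_open_triangle; simpl.
    destruct Hs as [-> | ->].
    + left. fold g. nra.
    + right. fold g. nra.
Qed.

Lemma seg_interior q sg j k X Y t : convex q sg -> (j < 4)%nat -> (k < 4)%nat -> j <> k ->
  in_open_segment (vtx q j) (vtx q (j+1)) X ->
  in_open_segment (vtx q k) (vtx q (k+1)) Y -> 0 < t < 1 ->
  in_interior q (vadd X (vscale t (vsub Y X))).
Proof.
  intros Hc Hj Hk Hjk HX HY Ht.
  apply interior_of_pos with sg; auto.
  intros i Hi.
  destruct (on_side q sg j X Hc Hj HX i Hi) as [X1 X2].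
  destruct (on_side q sg k Y Hc Hk HY i Hi) as [Y1 Y2].
  replace (sg * fs q i (vadd X (vscale t (vsub Y X))))
    with ((1-t) * (sg * fs q i X) + t * (sg * fs q i Y)) by (unfold fs; rewrite seg_aff; ring).
  destruct (Nat.eq_dec i j) as [E|E].
  - assert (0 < sg * fs q i Y) by (apply Y2; lia). nra.
  - assert (0 < sg * fs q i X) by (apply X2; lia). nra.
Qed.

Definition side (q : quad) (j : nat) (U V : pt) : Prop :=
  (vtx q j = U /\ vtx q (j+1) = V) \/ (vtx q j = V /\ vtx q (j+1) = U).

Lemma seg_rev U V P : in_open_segment U V P -> in_open_segment V U P.
Proof.
  intros [t [Ht ->]]. exists (1-t). split; [lra|].
  destruct U, V; unfold vadd, vscale, vsub; simpl; f_equal; ring.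
Qed.

Lemma side_seg q j U V P : side q j U V -> in_open_segment U V P ->
  in_open_segment (vtx q j) (vtx q (j+1)) P.
Proof.
  intros [[-> ->]|[-> ->]] H; auto. apply seg_rev; auto.
Qed.

Lemma reflect_neg U V v : reflect (vsub U V) v = reflect (vsub V U) v.
Proof.
  destruct U as [u1 u2], V as [v1 v2], v as [w1 w2]; unfold reflect, vsub, vscale, dot; simpl.
  replace ((v1 - u1) * (v1 - u1) + (v2 - u2) * (v2 - u2)) with
    ((u1 - v1) * (u1 - v1) + (u2 - v2) * (u2 - v2)) by ring.
  f_equal; unfold Rdiv; ring.
Qed.

Lemma side_refl q j U V v : side q j U V ->
  reflect (vsub (vtx q (j+1)) (vtx q j)) v = reflect (vsub V U) v.
Proof.
  intros [[-> ->]|[-> ->]]; auto. apply reflect_neg.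
Qed.

Lemma side_perp q j U V v : side q j U V -> dot v (vsub V U) = 0 ->
  dot v (vsub (vtx q (j+1)) (vtx q j)) = 0.
Proof.
  intros [[-> ->]|[-> ->]] H; auto.
  destruct U, V, v; unfold dot, vsub in *; simpl in *. lra.
Qed.

Lemma refl_perp e P Q : dot (vsub Q P) e = 0 ->
  vsub P Q = vscale 1 (reflect e (vsub Q P)).
Proof.
  intros H. unfold reflect. rewrite H.
  destruct e, P, Q; unfold vsub, vscale; simpl; f_equal; unfold Rdiv; ring.
Qed.

Lemma refl_rev e P Q R c : 0 < dot e e -> 0 < c ->
  vsub R Q = vscale c (reflect e (vsub Q P)) ->
  vsub P Q = vscale (1/c) (reflect e (vsub Q R)).
Proof.
  destruct e as [e1 e2], P as [p1 p2], Q as [q1 q2], R as [r1 r2].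
  unfold reflect, vsub, vscale, dot; simpl. intros He Hc H.
  injection H as H1 H2.
  assert (E1 : r1 = q1 + c * (2 * ((q1 - p1) * e1 + (q2 - p2) * e2) / (e1 * e1 + e2 * e2) * e1 - (q1 - p1))) by lra.
  assert (E2 : r2 = q2 + c * (2 * ((q1 - p1) * e1 + (q2 - p2) * e2) / (e1 * e1 + e2 * e2) * e2 - (q2 - p2))) by lra.
  rewrite E1, E2. f_equal; field; lra.
Qed.

Lemma mod6S i : ((S i) mod 6 = (S (i mod 6)) mod 6)%nat.
Proof.
  replace (S i) with (i + 1)%nat by lia. replace (S (i mod 6)) with (i mod 6 + 1)%nat by lia.
  rewrite Nat.Div0.add_mod_idemp_l. reflexivity.
Qed.

Lemma dot_neg_sub X Y e : dot (vsub Y X) e = 0 -> dot (vsub X Y) e = 0.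
Proof. destruct X, Y, e; unfold dot, vsub; simpl; intros; lra. Qed.

Lemma assemble q sg P0 P1 P2 P3 X Y Z W c1 c2 j3 j0 j1 :
  convex q sg -> (j3 < 4)%nat -> (j0 < 4)%nat -> (j1 < 4)%nat ->
  j3 <> j0 -> j0 <> j1 -> j1 <> j3 ->
  side q j3 P0 P3 -> side q j0 P0 P1 -> side q j1 P1 P2 ->
  0 < dot (vsub P1 P0) (vsub P1 P0) -> 0 < dot (vsub P2 P1) (vsub P2 P1) ->
  in_open_segment P0 P3 X -> in_open_segment P0 P3 W ->
  in_open_segment P0 P1 Y -> in_open_segment P1 P2 Z ->
  0 < c1 -> vsub Z Y = vscale c1 (reflect (vsub P1 P0) (vsub Y X)) ->
  0 < c2 -> vsub W Z = vscale c2 (reflect (vsub P2 P1) (vsub Z Y)) ->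
  dot (vsub Y X) (vsub P3 P0) = 0 -> dot (vsub W Z) (vsub P3 P0) = 0 ->
  has_periodic_billiard_path q.
Proof.
  intros Hc H3 H0 H1 D30 D01 D13 S3 S0 S1 Pa Pb SX SW SY SZ Hc1 R1 Hc2 R2 Q1 Q2.
  apply side_seg with (1 := S3) in SX. apply side_seg with (1 := S3) in SW.
  apply side_seg with (1 := S0) in SY. apply side_seg with (1 := S1) in SZ.
  exists 6%nat, (fun i => nth (i mod 6) [X;Y;Z;W;Z;Y] X),
    (fun i => nth (i mod 6) [j3;j0;j1;j3;j1;j0] 0%nat).
  split; [lia|]. split; [|split; [|split]].
  - intro i. replace (i + 6)%nat with (i + 1 * 6)%nat by lia.
    rewrite Nat.Div0.mod_add. auto.
  - intro i. assert (Hr : (i mod 6 < 6)%nat) by (apply Nat.mod_upper_bound; lia).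
    destruct (i mod 6) as [|[|[|[|[|[|r]]]]]]; simpl; try lia; auto.
  - intros i t Ht. rewrite mod6S.
    assert (Hr : (i mod 6 < 6)%nat) by (apply Nat.mod_upper_bound; lia).
    destruct (i mod 6) as [|[|[|[|[|[|r]]]]]]; simpl; try lia.
    + apply seg_interior with sg j3 j0; auto.
    + apply seg_interior with sg j0 j1; auto.
    + apply seg_interior with sg j1 j3; auto.
    + apply seg_interior with sg j3 j1; auto.
    + apply seg_interior with sg j1 j0; auto.
    + apply seg_interior with sg j0 j3; auto.
  - intro i. rewrite (mod6S (S i)), (mod6S i).
    assert (Hr : (i mod 6 < 6)%nat) by (apply Nat.mod_upper_bound; lia).
    destruct (i mod 6) as [|[|[|[|[|[|r]]]]]]; simpl; try lia.
    + exists c1. split; auto. rewrite (side_refl q j0 P0 P1); auto.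
    + exists c2. split; auto. rewrite (side_refl q j1 P1 P2); auto.
    + exists 1. split; [lra|]. apply refl_perp. apply (side_perp q j3 P0 P3); auto.
    + exists (1/c2). split; [apply Rdiv_lt_0_compat; lra|].
      rewrite (side_refl q j1 P1 P2); auto. apply refl_rev; auto.
    + exists (1/c1). split; [apply Rdiv_lt_0_compat; lra|].
      rewrite (side_refl q j0 P0 P1); auto. apply refl_rev; auto.
    + exists 1. split; [lra|]. apply refl_perp. apply (side_perp q j3 P0 P3); auto.
      apply dot_neg_sub; auto.
Qed.


Definition FH (b1 b2 d1 d2 : R) : Prop :=
  okP b1 b2 /\ okP d1 d2 /\ okP (1-b1) b2 /\ okP (1-d1) d2 /\ b2*d2 < 0.

Lemma hard_pos b1 b2 d1 d2 : FH b1 b2 d1 d2 -> 0 < b2 ->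
  b1*b1 - b1 + b2*b2 = 0 -> 0 < d1*(d1-b1) + d2*(d2-b2).
Proof.
  intros [[Ob1 [Ob2 Ob3]] [[Od1 [Od2 Od3]] [[Oc1 [Oc2 Oc3]] [[Oe1 [Oe2 Oe3]] Hs]]]] Hb2 Hr.
  assert (Ht : 0 < - d2) by nra.
  set (t := - d2) in *.
  assert (d2 = - t) by (unfold t; ring).
  rewrite H in *.
  assert (E1 : b2*b2 = b1 - b1*b1) by lra.
  assert (B1' : b1 * (1 - 4*b1) < 0) by nra.
  assert (B1 : 1/4 < b1) by nra.
  assert (B2' : (1-b1) * (4*b1 - 3) < 0) by nra.
  assert (B2 : b1 < 3/4) by nra.
  assert (Bb : 3/16 <= b2*b2) by nra.
  pose proof (Rle_0_sqr (d1 - 1/2)) as Sq; unfold Rsqr in Sq.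
  assert (T2 : 1/12 < t*t) by nra.
  assert (BT : 1/64 < (b2*t)*(b2*t)) by nra.
  assert (BT' : 1/8 < b2*t) by nra.
  pose proof (Rle_0_sqr (d1 - b1/2)) as Sq2; unfold Rsqr in Sq2.
  assert (DD : d1*(b1-d1) <= b1*b1/4) by lra.
  assert (BB : b1*b1 < 9/16) by nra.
  lra.
Qed.

Lemma okP_neg x y : okP x y -> okP x (-y).
Proof. unfold okP; intros; nra. Qed.

Lemma FH_neg b1 b2 d1 d2 : FH b1 b2 d1 d2 -> FH b1 (-b2) d1 (-d2).
Proof.
  intros [O1 [O2 [O3 [O4 H]]]]. unfold FH.
  split; [apply okP_neg; auto|]. split; [apply okP_neg; auto|].
  split; [apply okP_neg; auto|]. split; [apply okP_neg; auto|]. nra.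
Qed.

Lemma FH_swap b1 b2 d1 d2 : FH b1 b2 d1 d2 -> FH d1 d2 b1 b2.
Proof. intros [O1 [O2 [O3 [O4 H]]]]. unfold FH. repeat split; try apply O1; try apply O2; try apply O3; try apply O4; nra. Qed.

Lemma FH_mirror b1 b2 d1 d2 : FH b1 b2 d1 d2 -> FH (1-b1) b2 (1-d1) d2.
Proof.
  intros [O1 [O2 [O3 [O4 H]]]]. unfold FH.
  replace (1 - (1 - b1)) with b1 by ring. replace (1 - (1 - d1)) with d1 by ring.
  tauto.
Qed.

Lemma hard_all b1 b2 d1 d2 : FH b1 b2 d1 d2 ->
  b1*b1 - b1 + b2*b2 = 0 -> 0 < d1*(d1-b1) + d2*(d2-b2).
Proof.
  intros H Hr. destruct (Rlt_le_dec 0 b2) as [Hp|Hn].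
  - apply hard_pos; auto.
  - destruct H as [O1 [O2 [O3 [O4 Hs]]]].
    assert (b2 <> 0) by (intro E; rewrite E in Hs; lra).
    assert (Hb : 0 < - b2) by lra.
    pose proof (hard_pos b1 (-b2) d1 (-d2) (FH_neg b1 b2 d1 d2 (conj O1 (conj O2 (conj O3 (conj O4 Hs))))) Hb) as T.
    assert (T' : 0 < d1 * (d1 - b1) + - d2 * (- d2 - - b2)) by (apply T; lra).
    lra.
Qed.

Definition fr (A C P : pt) : pt :=
  (dot (vsub C A) (vsub P A) / dot (vsub C A) (vsub C A),
   cross (vsub C A) (vsub P A) / dot (vsub C A) (vsub C A)).

Lemma dotF A C U P Q R S p q r s : U = dot (vsub C A) (vsub C A) -> 0 < U ->
  fr A C P = p -> fr A C Q = q -> fr A C R = r -> fr A C S = s ->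
  dot (vsub P Q) (vsub R S) =
  U * ((fst p - fst q) * (fst r - fst s) + (snd p - snd q) * (snd r - snd s)).
Proof.
  intros eU HU <- <- <- <-. subst U.
  destruct A, C, P, Q, R, S; unfold fr, dot, cross, vsub in *; simpl in *.
  field. lra.
Qed.

Lemma crossF A C U P Q R S p q r s : U = dot (vsub C A) (vsub C A) -> 0 < U ->
  fr A C P = p -> fr A C Q = q -> fr A C R = r -> fr A C S = s ->
  cross (vsub P Q) (vsub R S) =
  U * ((fst p - fst q) * (snd r - snd s) - (snd p - snd q) * (fst r - fst s)).
Proof.
  intros eU HU <- <- <- <-. subst U.
  destruct A, C, P, Q, R, S; unfold fr, dot, cross, vsub in *; simpl in *.
  field. lra.
Qed.

Lemma frA A C : 0 < dot (vsub C A) (vsub C A) -> fr A C A = (0, 0).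
Proof.
  intros H. destruct A, C; unfold fr, dot, cross, vsub in *; simpl in *.
  f_equal; field; lra.
Qed.

Lemma frC A C : 0 < dot (vsub C A) (vsub C A) -> fr A C C = (1, 0).
Proof.
  intros H. destruct A, C; unfold fr, dot, cross, vsub in *; simpl in *.
  f_equal; field; lra.
Qed.

Lemma path_case q sg P0 P1 P2 P3 j3 j0 j1 :
  convex q sg -> (j3 < 4)%nat -> (j0 < 4)%nat -> (j1 < 4)%nat ->
  j3 <> j0 -> j0 <> j1 -> j1 <> j3 ->
  side q j3 P0 P3 -> side q j0 P0 P1 -> side q j1 P1 P2 ->
  dot (vsub P0 P1) (vsub P2 P1) = 0 -> 0 < dot (vsub P0 P1) (vsub P0 P1) ->
  0 < dot (vsub P2 P1) (vsub P2 P1) ->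
  0 < dot (vsub P1 P0) (vsub P3 P0) -> 0 < dot (vsub P3 P0) (vsub P2 P1) ->
  0 < dot (vsub P3 P0) (vsub P3 P1) ->
  has_periodic_billiard_path q.
Proof.
  intros Hc H3 H0 H1 D30 D01 D13 S3 S0 S1 Hab Ha Hb Hk Hm Hn.
  destruct (core P0 P1 P2 P3 Hab Ha Hb Hk Hm Hn) as
    [X [Y [Z [W [c1 [c2 [SX [SW [SY [SZ [Hc1 [R1 [Hc2 [R2 [Q1 Q2]]]]]]]]]]]]]]].
  apply (assemble q sg P0 P1 P2 P3 X Y Z W c1 c2 j3 j0 j1); auto.
  replace (dot (vsub P1 P0) (vsub P1 P0)) with (dot (vsub P0 P1) (vsub P0 P1)); auto.
  destruct P0, P1; unfold dot, vsub; simpl; ring.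
Qed.

Lemma okP_fr U x y x' y' : 0 < U -> okP (U*x) (U*y) -> x = x' -> y = y' -> okP x' y'.
Proof.
  intros HU [H1 [H2 H3]] <- <-. unfold okP.
  assert (0 < U*U) by nra.
  split; [nra|split].
  - apply Rmult_lt_reg_l with (U*U); auto. nra.
  - apply Rmult_lt_reg_l with (U*U); auto. nra.
Qed.

Lemma sq0 x y : x*x + y*y <= 0 -> x = 0 /\ y = 0.
Proof.
  intros H. pose proof (Rle_0_sqr x). pose proof (Rle_0_sqr y). unfold Rsqr in *.
  split; apply Rsqr_0_uniq; unfold Rsqr; lra.
Qed.

Lemma mul0 U X : 0 < U -> U * X = 0 -> X = 0.
Proof. intros H E. apply Rmult_integral in E. destruct E; auto; lra. Qed.

Lemma mulpos U X : 0 < U -> 0 < U * X -> 0 < X.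
Proof. intros H E. destruct (Rlt_le_dec 0 X); auto. nra. Qed.

Lemma sgU s U X : 0 < U -> 0 < s * X -> 0 < s * (U * X).
Proof. intros. replace (s * (U * X)) with (U * (s * X)) by ring. apply Rmult_lt_0_compat; auto. Qed.

Lemma zeroU U X : X = 0 -> U * X = 0.
Proof. intros ->; ring. Qed.


Ltac frd A C U eU HU := erewrite (dotF A C U) by (first [exact eU | exact HU | eassumption]).
Ltac frc A C U eU HU := erewrite (crossF A C U) by (first [exact eU | exact HU | eassumption]).
Ltac frdH A C U eU HU H := erewrite (dotF A C U) in H by (first [exact eU | exact HU | eassumption]).
Ltac frcH A C U eU HU H := erewrite (crossF A C U) in H by (first [exact eU | exact HU | eassumption]).

Ltac post A C U eU HU := frd A C U eU HU; cbn [fst snd]; apply Rmult_lt_0_compat; [exact HU|nra].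

Ltac sidet := unfold side, vtx; simpl; first [left; split; reflexivity | right; split; reflexivity].

Theorem proposition3p3p1 (q : quad) :
  is_quadrilateral q ->
  near_square (PI / 12) q ->
  right_adj_acute q ->
  has_periodic_billiard_path q.
Proof.
  destruct q as [A B C D].
  unfold is_quadrilateral, near_square, right_adj_acute, param1, param2, param3, param4; simpl.
  intros Hq [N1 [N2 [N3 N4]]] [k [Hk [Hr Hac]]].
  assert (HU : 0 < dot (vsub C A) (vsub C A)).
  { destruct A, B, C, D; unfold dot, cross, vsub in *; simpl in *.
    destruct (Rlt_le_dec 0 ((r3 - r) * (r3 - r) + (r4 - r0) * (r4 - r0))) as [|Hle]; auto.
    destruct (sq0 _ _ Hle) as [H H0].
    rewrite H, H0 in Hq. lra. }
  pose proof (frA A C HU) as FA. pose proof (frC A C HU) as FC.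
  destruct (fr A C B) as [b1 b2] eqn:FB. destruct (fr A C D) as [d1 d2] eqn:FD.
  destruct (ex_intro (fun U => U = dot (vsub C A) (vsub C A)) _ eq_refl) as [U eU].
  rewrite <- eU in HU.
  frcH A C U eU HU Hq. frcH A C U eU HU Hq.
  cbn [fst snd] in Hq.
  assert (Hs : b2 * d2 < 0).
  { assert (0 < U*U) by nra. 
    assert (E: U * ((1 - 0) * (b2 - 0) - (0 - 0) * (b1 - 0)) * (U * ((1 - 0) * (d2 - 0) - (0 - 0) * (d1 - 0))) = (U*U) * (b2*d2)) by ring.
    rewrite E in Hq. nra. }
  assert (Hb2 : 0 < b2*b2).
  { destruct (Rtotal_order b2 0) as [h|[h|h]]; [nra| |nra]. rewrite h in Hs. lra. }
  assert (Hd2 : 0 < d2*d2).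
  { destruct (Rtotal_order d2 0) as [h|[h|h]]; [nra| |nra]. rewrite h in Hs. lra. }
  assert (Hbd : 0 < (b2-d2)*(b2-d2)) by nra.
  assert (S1 : 0 <= (b1-1)*(b1-1)) by (pose proof (Rle_0_sqr (b1-1)); unfold Rsqr in *; lra).
  assert (S2 : 0 <= (d1-1)*(d1-1)) by (pose proof (Rle_0_sqr (d1-1)); unfold Rsqr in *; lra).
  assert (S3 : 0 <= (b1-d1)*(b1-d1)) by (pose proof (Rle_0_sqr (b1-d1)); unfold Rsqr in *; lra).
  assert (S4 : 0 <= b1*b1) by (pose proof (Rle_0_sqr b1); unfold Rsqr in *; lra).
  assert (S5 : 0 <= d1*d1) by (pose proof (Rle_0_sqr d1); unfold Rsqr in *; lra).
    assert (nAB : 0 < dot (vsub A B) (vsub A B)) by post A C U eU HU.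
  assert (nBA : 0 < dot (vsub B A) (vsub B A)) by post A C U eU HU.
  assert (nAC : 0 < dot (vsub A C) (vsub A C)) by post A C U eU HU.
  assert (nCA : 0 < dot (vsub C A) (vsub C A)) by post A C U eU HU.
  assert (nAD : 0 < dot (vsub A D) (vsub A D)) by post A C U eU HU.
  assert (nDA : 0 < dot (vsub D A) (vsub D A)) by post A C U eU HU.
  assert (nBC : 0 < dot (vsub B C) (vsub B C)) by post A C U eU HU.
  assert (nCB : 0 < dot (vsub C B) (vsub C B)) by post A C U eU HU.
  assert (nCD : 0 < dot (vsub C D) (vsub C D)) by post A C U eU HU.
  assert (nDC : 0 < dot (vsub D C) (vsub D C)) by post A C U eU HU.
  assert (nBD : 0 < dot (vsub B D) (vsub B D)) by post A C U eU HU.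
  assert (nDB : 0 < dot (vsub D B) (vsub D B)) by post A C U eU HU.
  assert (O1 : okP b1 b2).
  { pose proof (near_ok _ _ nCA nBA N1) as H.
    frdH A C U eU HU H. frcH A C U eU HU H. cbn [fst snd] in H.
    apply (okP_fr U _ _ b1 b2 HU H); ring. }
  assert (O2 : okP d1 d2).
  { pose proof (near_ok _ _ nCA nDA N2) as H.
    frdH A C U eU HU H. frcH A C U eU HU H. cbn [fst snd] in H.
    apply (okP_fr U _ _ d1 d2 HU H); ring. }
  assert (O3 : okP (1-b1) b2).
  { pose proof (near_ok _ _ nAC nBC N3) as H.
    frdH A C U eU HU H. frcH A C U eU HU H. cbn [fst snd] in H.
    rewrite <- (Ropp_involutive b2). apply okP_neg.
    apply (okP_fr U _ _ (1-b1) (-b2) HU H); ring. }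
  assert (O4 : okP (1-d1) d2).
  { pose proof (near_ok _ _ nAC nDC N4) as H.
    frdH A C U eU HU H. frcH A C U eU HU H. cbn [fst snd] in H.
    rewrite <- (Ropp_involutive d2). apply okP_neg.
    apply (okP_fr U _ _ (1-d1) (-d2) HU H); ring. }
  assert (HF : FH b1 b2 d1 d2) by (unfold FH; auto).
  pose proof O1 as [P1a [P1b P1c]]. pose proof O2 as [P2a [P2b P2c]].
  pose proof O3 as [P3a [P3b P3c]]. pose proof O4 as [P4a [P4b P4c]].
  set (q := {| qA := A; qB := B; qC := C; qD := D |}).
  assert (Hcv : exists sg, convex q sg).
  { destruct (Rlt_le_dec 0 d2) as [Hp|Hn].
    - exists 1. split; [left; auto|].
      intros i Hi. destruct i as [|[|[|[|i]]]]; try lia; unfold fs; simpl;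
      split; frc A C U eU HU; cbn [fst snd]; apply sgU; auto; nra.
    - exists (-1). split; [right; auto|].
      intros i Hi. destruct i as [|[|[|[|i]]]]; try lia; unfold fs; simpl;
      split; frc A C U eU HU; cbn [fst snd]; apply sgU; auto; nra. }
  destruct Hcv as [sg Hcv].
  assert (XA : cross (vsub C A) (vsub B A) * cross (vsub C A) (vsub D A) < 0).
  { frc A C U eU HU. frc A C U eU HU. cbn [fst snd]. nra. }
  assert (XC : cross (vsub A C) (vsub B C) * cross (vsub A C) (vsub D C) < 0).
  { frc A C U eU HU. frc A C U eU HU. cbn [fst snd]. nra. }
  pose proof (sum_ok _ _ _ nCA nBA nDA N1 N2 XA) as [SAr SAa].
  pose proof (sum_ok _ _ _ nAC nBC nDC N3 N4 XC) as [SCr SCa].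
  clear XA XC.
  assert (M1 : 0 < d1*(1-b1) - b2*d2) by nra.
  assert (M2 : 0 < b1*(1-d1) - b2*d2) by nra.
  clear N1 N2 N3 N4 O1 O2 O3 O4 S1 S2 S3 S4 S5 Hb2 Hd2 Hbd Hq.
  destruct k as [|[|[|[|k]]]]; try lia.
  - unfold vangle, param1, param2 in Hr; simpl in Hr. apply SAr in Hr.
    frdH A C U eU HU Hr. cbn [fst snd] in Hr. apply mul0 in Hr; auto.
    destruct Hac as [Ha|Ha]; unfold vangle in Ha; simpl in Ha.
    + apply acute_ok in Ha; auto.
      frdH A C U eU HU Ha. cbn [fst snd] in Ha. apply mulpos in Ha; auto.
      apply (path_case q sg B A D C 1 0 3); auto; try lia; try sidet;
        try (frd A C U eU HU; cbn [fst snd]; first [apply zeroU; lra | apply Rmult_lt_0_compat; [exact HU|lra]]).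
    + apply acute_ok in Ha; auto.
      frdH A C U eU HU Ha. cbn [fst snd] in Ha. apply mulpos in Ha; auto.
      apply (path_case q sg D A B C 2 3 0); auto; try lia; try sidet;
        try (frd A C U eU HU; cbn [fst snd]; first [apply zeroU; lra | apply Rmult_lt_0_compat; [exact HU|lra]]).
  - unfold vangle in Hr; simpl in Hr. apply right_ok in Hr; auto.
    frdH A C U eU HU Hr. cbn [fst snd] in Hr. apply mul0 in Hr; auto.
    destruct Hac as [Ha|Ha]; unfold vangle, param3, param4 in Ha; simpl in Ha.
    + apply SCa in Ha.
      frdH A C U eU HU Ha. cbn [fst snd] in Ha. apply mulpos in Ha; auto.
      apply (path_case q sg C B A D 2 1 0); auto; try lia; try sidet;
        try (frd A C U eU HU; cbn [fst snd]; first [apply zeroU; lra | apply Rmult_lt_0_compat; [exact HU|lra]]).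
      frd A C U eU HU; cbn [fst snd]. apply Rmult_lt_0_compat; [exact HU|].
      pose proof (hard_all (1-b1) b2 (1-d1) d2 (FH_mirror _ _ _ _ HF)). lra.
    + unfold param1, param2 in Ha; simpl in Ha. apply SAa in Ha.
      frdH A C U eU HU Ha. cbn [fst snd] in Ha. apply mulpos in Ha; auto.
      apply (path_case q sg A B C D 3 0 1); auto; try lia; try sidet;
        try (frd A C U eU HU; cbn [fst snd]; first [apply zeroU; lra | apply Rmult_lt_0_compat; [exact HU|lra]]).
      frd A C U eU HU; cbn [fst snd]. apply Rmult_lt_0_compat; [exact HU|].
      pose proof (hard_all b1 b2 d1 d2 HF). lra.
  - unfold vangle, param3, param4 in Hr; simpl in Hr. apply SCr in Hr.
    frdH A C U eU HU Hr. cbn [fst snd] in Hr. apply mul0 in Hr; auto.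
    destruct Hac as [Ha|Ha]; unfold vangle in Ha; simpl in Ha.
    + apply acute_ok in Ha; auto.
      frdH A C U eU HU Ha. cbn [fst snd] in Ha. apply mulpos in Ha; auto.
      apply (path_case q sg D C B A 3 2 1); auto; try lia; try sidet;
        try (frd A C U eU HU; cbn [fst snd]; first [apply zeroU; lra | apply Rmult_lt_0_compat; [exact HU|lra]]).
    + apply acute_ok in Ha; auto.
      frdH A C U eU HU Ha. cbn [fst snd] in Ha. apply mulpos in Ha; auto.
      apply (path_case q sg B C D A 0 1 2); auto; try lia; try sidet;
        try (frd A C U eU HU; cbn [fst snd]; first [apply zeroU; lra | apply Rmult_lt_0_compat; [exact HU|lra]]).
  - unfold vangle in Hr; simpl in Hr. apply right_ok in Hr; auto.
    frdH A C U eU HU Hr. cbn [fst snd] in Hr. apply mul0 in Hr; auto.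
    destruct Hac as [Ha|Ha]; unfold vangle, param1, param2, param3, param4 in Ha; simpl in Ha.
    + apply SAa in Ha.
      frdH A C U eU HU Ha. cbn [fst snd] in Ha. apply mulpos in Ha; auto.
      apply (path_case q sg A D C B 0 3 2); auto; try lia; try sidet;
        try (frd A C U eU HU; cbn [fst snd]; first [apply zeroU; lra | apply Rmult_lt_0_compat; [exact HU|lra]]).
      frd A C U eU HU; cbn [fst snd]. apply Rmult_lt_0_compat; [exact HU|].
      pose proof (hard_all d1 d2 b1 b2 (FH_swap _ _ _ _ HF)). lra.
    + apply SCa in Ha.
      frdH A C U eU HU Ha. cbn [fst snd] in Ha. apply mulpos in Ha; auto.
      apply (path_case q sg C D A B 1 2 3); auto; try lia; try sidet;
        try (frd A C U eU HU; cbn [fst snd]; first [apply zeroU; lra | apply Rmult_lt_0_compat; [exact HU|lra]]).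
      frd A C U eU HU; cbn [fst snd]. apply Rmult_lt_0_compat; [exact HU|].
      pose proof (hard_all (1-d1) d2 (1-b1) b2 (FH_mirror _ _ _ _ (FH_swap _ _ _ _ HF))). lra.
Qed.
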